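(* Let $C_1,C_2,\alpha,\beta>0$ be constants and $d\ge1$, and let $k(t)$ solve the ODE $$k'(t)=C_1k(1-k^{\alpha})+C_2k^{d+1}e^{-\beta t}.$$ Then there exists $\delta>0$ such that if $0<k(0)<\delta$, then $k(t)\to1$ exponentially as $t\to\infty$, i.e. $|k(t)-1|\le Ce^{-\epsilon t}$ for some constants $C,\epsilon>0$.
   Context: In the paper $d\ge3$ denotes the spatial dimension. *)

(* Defs.v *)
From HB Require Import structures.
From mathcomp Require Import all_boot all_order all_algebra.
From mathcomp Require Import all_classical all_reals all_analysis.
Set Implicit Arguments. Unset Strict Implicit. Unset Printing Implicit Defensive.
Import Order.TTheory GRing.Theory Num.Theory.
Import numFieldNormedType.Exports.
Local Open Scope ring_scope.

Definition ode_rhs (R : realType) (C1 C2 alpha beta : R) (d : nat) (t x : R) : R :=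
  C1 * x * (1 - x `^ alpha) + C2 * x ^+ d.+1 * expR (- (beta * t)).

(* Main.v *)
Require Import Defs.
From HB Require Import structures.
From mathcomp Require Import all_boot all_order all_algebra.
From mathcomp Require Import all_classical all_reals all_analysis.
From mathcomp Require Import ring lra.
Import Order.TTheory GRing.Theory Num.Theory.
Import numFieldNormedType.Exports.
Local Open Scope classical_set_scope.
Local Open Scope ring_scope.

Lemma near_right_ex {R : realType} (a : R) (P : R -> Prop) :
  (\forall x \near a^'+, P x) -> exists2 e : R, 0 < e & forall x, a < x < a + e -> P x.
Proof.
move=> /nbhs_ballP [e /= e0 H]; exists e => // x /andP[ax xe]; apply: H => //.
rewrite /ball /= ltr_distlC; apply/andP; split; last by [].
by rewrite (lt_trans _ ax) // ltrBlDr ltrDl.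
Qed.

Lemma near_dnbhs_ex {R : realType} (a : R) (P : R -> Prop) :
  (\forall x \near a^', P x) -> exists2 e : R, 0 < e & forall x, a - e < x < a -> P x.
Proof.
move=> /nbhs_ballP [e /= e0 H]; exists e => // x /andP[ax xe]; apply: H => //.
  rewrite /ball /= ltr_distlC; apply/andP; split; first by [].
  by rewrite (lt_trans xe) // ltrDl.
by rewrite lt_eqF.
Qed.

Lemma near_nbhs_ex {R : realType} (a : R) (P : R -> Prop) :
  (\forall x \near a, P x) -> exists2 e : R, 0 < e & forall x, a - e < x < a + e -> P x.
Proof.
move=> /nbhs_ballP [e /= e0 H]; exists e => // x hx; apply: H => //.
by rewrite /ball /= ltr_distlC.
Qed.
Lemma deriv_pos_left {R : realType} (h : R -> R) (t D : R) :
  is_derive t 1 h D -> 0 < D -> exists2 e : R, 0 < e & forall x, t - e < x < t -> h x < h t.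
Proof.
move=> [dv dval] D0.
have hc : (fun s : R => s^-1 *: ((h \o shift t) (s *: 1) - h t)) @ 0^' --> D.
  by rewrite -dval; exact: dv.
have H1 := @cvgr_gt R R (0^') _ _ D hc 0 D0.
have [e e0 He] := @near_dnbhs_ex R 0 _ (H1 _).
exists e => // x /andP[xl xr].
have := He (x - t); rewrite /= scaler1.
rewrite /= addrC subrK.
have Hin : (- e + 0 < x - t < 0) by apply/andP; split; lra.
move=> /(_ Hin) H3; have H4 : 0 < (x - t)^-1 * (h x - h t) by exact: H3.
move: H4.
have xt : (x - t)^-1 < 0 by rewrite invr_lt0 subr_lt0.
move=> H4; rewrite -subr_lt0; rewrite -(nmulr_rgt0 _ xt) //.
Qed.

Lemma cross {R : realType} (a b : R) (h : R -> R) :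
  h x @[x --> a^'+] --> h a ->
  (forall t, a < t <= b -> {for t, continuous h}) ->
  0 < h a ->
  (forall t, a < t <= b -> h t = 0 -> exists2 D : R, 0 < D & is_derive t 1 h D) ->
  forall t, a <= t <= b -> 0 < h t.
Proof.
move=> hra hc ha hd t /andP[at0 tb].
rewrite ltNge; apply/negP => ht.
pose S := [set s | a <= s <= t /\ forall r, a <= r <= s -> 0 < h r].
have Sa : S a.
  split; first by rewrite lexx at0.
  move=> r /andP[ar ra]; have -> : r = a by apply/le_anti; rewrite ar ra.
  done.
have Sub : ubound S t by move=> s [/andP[_ st] _].
have hs : has_sup S by split; [exists a | exists t].
set tau := sup S.
have atau : a <= tau by apply: sup_upper_bound.
have taut : tau <= t by apply: sup_le_ub => //; exists a.
have Hlt : forall r, a <= r < tau -> 0 < h r.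
  move=> r /andP[ar rt].
  have [|e [_ Se2] re] := sup_adherent (eps := tau - r) _ hs; first by rewrite subr_gt0.
  rewrite (_ : tau = sup S) // in rt.
  by apply: Se2; rewrite ar /=; move: re; rewrite -/tau; lra.
have htau : 0 < h tau.
  case: (eqVneq tau a) => [-> // | ta].
  have ta' : a < tau by rewrite lt_neqAle eq_sym ta atau.
  have tb' : tau <= b by apply: le_trans taut tb.
  have ex_r : forall e : R, 0 < e -> exists r, [/\ a <= r, r < tau & tau - e < r].
    move=> e e0; exists (tau - Num.min e (tau - a) / 2).
    have m0 : 0 < Num.min e (tau - a) by rewrite lt_min e0 subr_gt0.
    have m1 : Num.min e (tau - a) <= e by rewrite ge_min lexx.
    have m2 : Num.min e (tau - a) <= tau - a by rewrite ge_min lexx orbT.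
    split; lra.
  case: (ltgtP (h tau) 0) => [hneg | // | h0].
  - have H1 := @cvgr_lt R R (nbhs tau) _ _ (h tau) (hc tau (ltac:(by rewrite ta' tb'))) 0 hneg.
    have [e e0 He] := @near_nbhs_ex R tau _ (H1 _).
    have [r [ar rt re]] := ex_r e e0.
    have : h r < 0 by apply: He; apply/andP; split; lra.
    by rewrite ltNge le_eqVlt Hlt ?orbT // ar rt.
  - have [D D0 dD] := hd tau (ltac:(by rewrite ta' tb')) h0.
    have [e e0 He] := deriv_pos_left _ _ _ dD D0.
    have [r [ar rt re]] := ex_r e e0.
    have : h r < h tau by apply: He; apply/andP; split; lra.
    by rewrite h0 ltNge le_eqVlt Hlt ?orbT // ar rt.
have taut' : tau < t.
  rewrite lt_neqAle taut andbT; apply/eqP => et.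
  by move: ht; rewrite -et leNgt htau.
have [e e0 He] : exists2 e : R, 0 < e & forall x, tau < x < tau + e -> 0 < h x.
  case: (eqVneq tau a) => [ta | ta].
    have H1 := @cvgr_gt R R (a^'+) _ _ (h a) hra 0 ha.
    have [e e0 He] := @near_right_ex R a _ (H1 _).
    by exists e => // x; rewrite ta; apply: He.
  have ta' : a < tau by rewrite lt_neqAle eq_sym ta atau.
  have tb' : tau <= b by apply: le_trans taut tb.
  have H1 := @cvgr_gt R R (nbhs tau) _ _ (h tau) (hc tau (ltac:(by rewrite ta' tb'))) 0 htau.
  have [e e0 He] := @near_nbhs_ex R tau _ (H1 _).
  exists e => // x /andP[x1 x2]; apply: He; apply/andP; split; lra.
pose s := tau + Num.min e (t - tau) / 2.
have m0 : 0 < Num.min e (t - tau) by rewrite lt_min e0 subr_gt0.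
have m1 : Num.min e (t - tau) <= e by rewrite ge_min lexx.
have m2 : Num.min e (t - tau) <= t - tau by rewrite ge_min lexx orbT.
have Ss : S s.
  split; first by apply/andP; split; rewrite /s; lra.
  move=> r /andP[ar rs].
  case: (ltgtP r tau) => [rt | rt | ->] //.
  - by apply: Hlt; rewrite ar rt.
  - by apply: He; apply/andP; split; rewrite /s in rs; lra.
have := sup_upper_bound hs Ss; rewrite -/tau /s; lra.
Qed.
Lemma der_cont {R : realType} (f : R -> R) (t D : R) : is_derive t 1 f D -> {for t, continuous f}.
Proof. by move=> [dv _]; apply/differentiable_continuous/derivable1_diffP. Qed.

Lemma barrier {R : realType} (u w U W : R -> R) (a b : R) :
  0 <= a ->
  u x @[x --> a^'+] --> u a ->
  w x @[x --> a^'+] --> w a ->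
  (forall t : R, 0 < t -> is_derive t 1 u (U t)) ->
  (forall t : R, 0 < t -> is_derive t 1 w (W t)) ->
  u a < w a ->
  (forall t : R, a < t <= b -> u t = w t -> U t < W t) ->
  forall t : R, a <= t <= b -> u t < w t.
Proof.
move=> a0 ur wr ud wd uw H t ht.
rewrite -subr_gt0.
have := @cross R a b (w - u) _ _ _ _ t ht; apply.
- exact: cvgB.
- move=> s /andP[sa sb]; apply: der_cont (is_deriveB _ _); [apply: wd|apply: ud]; lra.
- by rewrite /= subr_gt0.
- move=> s /andP[sa sb] hs; exists (W s - U s).
    by rewrite subr_gt0; apply: H; [rewrite sa sb| move: hs => /= /eqP; rewrite subr_eq0 => /eqP].
  apply: is_deriveB; [apply: wd|apply: ud]; lra.
Qed.
Lemma is_derive_lin {R : realType} (c t : R) : is_derive t 1 (fun s : R => c * s) c.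
Proof.
have -> : (fun s : R => c * s) = c \*: (@id R) by apply/funext.
move: (is_deriveZ c (is_derive_id t 1)) => H; apply: (is_derive_eq H).
exact: mulr1.
Qed.

Lemma is_derive_bar {R : realType} (p q c t : R) :
  is_derive t 1 (fun s : R => p + q * expR (c * s)) (q * (c * expR (c * t))).
Proof.
have h1 : is_derive t 1 (fun s : R => expR (c * s)) (expR (c * t) * c).
  have -> : (fun s : R => expR (c * s)) = expR \o (fun s => c * s) by apply/funext.
  exact: (is_derive1_comp (is_derive_expR (c * t)) (is_derive_lin c t)).
have -> : (fun s : R => p + q * expR (c * s)) = cst p + q \*: (fun s : R => expR (c * s)).
  by apply/funext.
move: (is_deriveD (is_derive_cst p t 1) (is_deriveZ q h1)) => H; apply: (is_derive_eq H).
rewrite add0r; change (q * (expR (c * t) * c) = q * (c * expR (c * t))).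
by rewrite [expR _ * c]mulrC.
Qed.

Lemma powR_pos {R : realType} (x a : R) : 0 < x -> x `^ a = expR (a * ln x).
Proof. by move=> x0; rewrite /powR gt_eqF. Qed.

Lemma rhs_pos {R : realType} (C1 C2 alpha beta : R) (d : nat) (t x : R) :
  0 < C1 -> 0 <= C2 -> 0 < alpha -> 0 < x < 1 -> 0 < ode_rhs C1 C2 alpha beta d t x.
Proof.
move=> c1 c2 al /andP[x0 x1]; rewrite /ode_rhs.
have p1 : x `^ alpha < 1.
  by rewrite powR_pos // expR_lt1 pmulr_rlt0 // ln_lt0 // x0 x1.
have t1 : 0 < C1 * x * (1 - x `^ alpha) by rewrite !mulr_gt0 // subr_gt0.
have t2 : 0 <= C2 * x ^+ d.+1 * expR (- (beta * t)).
  by rewrite !mulr_ge0 // ?exprn_ge0 ?ltW // expR_ge0.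
lra.
Qed.

Lemma rhs_up1 {R : realType} (C1 C2 alpha beta : R) (d : nat) (t x : R) :
  0 < C1 -> 0 <= C2 -> 0 <= beta -> 0 <= t -> 0 < x <= 2 ->
  ode_rhs C1 C2 alpha beta d t x <= (C1 + C2 * 2 ^+ d) * x.
Proof.
move=> c1 c2 b0 t0 /andP[x0 x2]; rewrite /ode_rhs.
have p0 := powR_ge0 x alpha.
have h1 : 0 <= C1 * x * x `^ alpha by rewrite !mulr_ge0 // ltW.
have E1 : expR (- (beta * t)) <= 1 by rewrite expR_le1 oppr_le0 mulr_ge0.
have h2 : C2 * x ^+ d.+1 * expR (- (beta * t)) <= C2 * x ^+ d.+1.
  by apply: ler_piMr => //; rewrite mulr_ge0 // exprn_ge0 // ltW.
have h3 : x ^+ d <= 2 ^+ d by apply: lerXn2r => //; rewrite nnegrE //; lra.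
have h4 : C2 * x ^+ d.+1 <= C2 * 2 ^+ d * x.
  by rewrite exprSr mulrA; apply: ler_wpM2r; [exact: ltW | exact: ler_wpM2l].
lra.
Qed.

Lemma rhs_low {R : realType} (C1 C2 alpha beta : R) (d : nat) (t m x : R) :
  0 < C1 -> 0 <= C2 -> 0 < alpha -> 0 < m <= x -> x < 1 ->
  C1 * m * alpha * (1 - x) <= (1 + alpha) * ode_rhs C1 C2 alpha beta d t x.
Proof.
move=> c1 c2 al /andP[m0 mx] x1; rewrite /ode_rhs.
have x0 : 0 < x by apply: lt_le_trans mx.
set y := 1 - x.
have y0 : 0 < y by rewrite /y subr_gt0.
have y1 : y < 1 by rewrite /y; lra.
set p := x `^ alpha.
have lnx : ln x <= - y.
  have := @le_ln1Dx R (- y); rewrite (_ : 1 + - y = x); last by rewrite /y; lra.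
  by apply; lra.
have pE : p <= expR (- (alpha * y)).
  by rewrite /p powR_pos // ler_expR -mulrN ler_pM2l.
have pP : p * (1 + alpha * y) <= 1.
  have e1 : 1 + alpha * y <= expR (alpha * y) by exact: expR_ge1Dx.
  have e2 : expR (- (alpha * y)) * expR (alpha * y) = 1 by rewrite -expRD addNr expR0.
  have p0 : 0 <= p by exact: powR_ge0.
  have ay : 0 <= 1 + alpha * y by rewrite addr_ge0 // mulr_ge0 // ltW.
  apply: (le_trans (y := expR (- (alpha * y)) * (1 + alpha * y))).
    by apply: ler_wpM2r.
  rewrite -[X in _ <= X]e2.
  by apply: ler_wpM2l => //; exact: expR_ge0.
have pl1 : p <= 1.
  by apply: le_trans pE _; rewrite expR_le1 oppr_le0 mulr_ge0 // ltW.
have hint : 0 <= (1 - p) * (alpha * (1 - y)).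
  by rewrite mulr_ge0 // ?subr_ge0 // mulr_ge0 // ?subr_ge0 ltW.
have q : alpha * y <= (1 - p) * (1 + alpha) by nra.
have t2 : 0 <= C2 * x ^+ d.+1 * expR (- (beta * t)).
  by rewrite !mulr_ge0 // ?exprn_ge0 ?ltW // expR_ge0.
have q2 : C1 * m * (alpha * y) <= C1 * x * ((1 - p) * (1 + alpha)).
  apply: le_trans (_ : C1 * m * ((1 - p) * (1 + alpha)) <= _).
    by apply: ler_wpM2l => //; rewrite mulr_ge0 // ltW.
  apply: ler_wpM2r; first by rewrite mulr_ge0 // ?subr_ge0 // addr_ge0 // ltW.
  by apply: ler_wpM2l => //; rewrite ltW.
have t3 : 0 <= (1 + alpha) * (C2 * x ^+ d.+1 * expR (- (beta * t))).
  by rewrite mulr_ge0 // addr_ge0 // ltW.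
rewrite mulrDr; move: q2 t3; rewrite /y; nra.
Qed.

Lemma rhs_hi {R : realType} (C1 C2 alpha beta : R) (d : nat) (t x : R) :
  0 < C1 -> 0 <= C2 -> 0 < alpha -> 1 < x <= 2 ->
  2 * ode_rhs C1 C2 alpha beta d t x <=
    - (C1 * alpha * (x - 1)) + 2 * (C2 * 2 ^+ d.+1 * expR (- (beta * t))).
Proof.
move=> c1 c2 al /andP[x1 x2]; rewrite /ode_rhs.
have x0 : 0 < x by lra.
set p := x `^ alpha.
have lx0 : 0 <= ln x by apply: ln_ge0; exact: ltW.
have lnx : x - 1 <= x * ln x.
  have := @le_ln1Dx R (x^-1 - 1); rewrite [1 + _]addrC subrK lnV ?posrE //.
  move=> /(_ _) H; have {}H : - ln x <= x^-1 - 1.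
    apply: H; have : 0 < x^-1 by rewrite invr_gt0.
    lra.
  have : x * (- ln x) <= x * (x^-1 - 1) by apply: ler_wpM2l => //; exact: ltW.
  rewrite mulrBr divff ?gt_eqF // mulr1; lra.
have l2 : x - 1 <= 2 * ln x by nra.
have pE : 1 + alpha * ln x <= p by rewrite /p powR_pos //; exact: expR_ge1Dx.
have h1 : 2 * (C1 * x * (1 - p)) <= - (C1 * alpha * (x - 1)).
  have e : alpha * (x - 1) <= 2 * (p - 1).
    have : alpha * (x - 1) <= alpha * (2 * ln x) by apply: ler_wpM2l => //; exact: ltW.
    lra.
  have p1 : 1 <= p by have := mulr_ge0 (ltW al) lx0; lra.
  have : C1 * x * (1 - p) <= C1 * (1 - p).
    have : 0 <= C1 * (p - 1) * (x - 1) by rewrite !mulr_ge0 // ?subr_ge0 // ?ltW.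
    nra.
  have : C1 * (alpha * (x - 1)) <= C1 * (2 * (p - 1)) by apply: ler_wpM2l => //; exact: ltW.
  lra.
have E0 : 0 <= expR (- (beta * t)) by exact: expR_ge0.
have h2 : C2 * x ^+ d.+1 * expR (- (beta * t)) <= C2 * 2 ^+ d.+1 * expR (- (beta * t)).
  apply: ler_wpM2r => //; apply: ler_wpM2l => //.
  by apply: lerXn2r => //; rewrite nnegrE //; lra.
lra.
Qed.

Theorem lemma5p12 (R : realType) (C1 C2 alpha beta : R) (d : nat) :
  0 < C1 -> 0 < C2 -> 0 < alpha -> 0 < beta -> (1 <= d)%N ->
  exists2 delta : R, 0 < delta &
    forall k : R -> R,
      {within `[0, +oo[%classic, continuous k} ->
      (forall t : R, 0 < t -> is_derive t 1 k (ode_rhs C1 C2 alpha beta d t (k t))) ->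
      0 < k 0 < delta ->
      exists C : R, exists eps : R,
        [/\ 0 < C, 0 < eps &
            forall t : R, 0 <= t -> `|k t - 1| <= C * expR (- (eps * t))].
Proof.
move=> c1 c2 al be d1.
set L := C1 + C2 * 2 ^+ d + 1.
have L0 : 0 < L by rewrite /L; have := mulr_ge0 (ltW c2) (exprn_ge0 d (ler0n R 2)); lra.
set P2 := 2 `^ alpha.
have P21 : 1 < P2.
  by rewrite /P2 powR_pos ?expR_gt1 ?mulr_gt0 ?ln_gt0 //; lra.
set K := C2 * 2 ^+ d.+1.
have K0 : 0 < K by rewrite /K mulr_gt0 // exprn_gt0 //; lra.
set q := 2 * C1 * (P2 - 1) / K.
have q0 : 0 < q by rewrite /q !mulr_gt0 ?invr_gt0 // ?subr_gt0 //; lra.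
have qK : q * K = 2 * C1 * (P2 - 1) by rewrite /q divfK // gt_eqF.
set T := (`|ln q| + 1) / beta.
have bT : beta * T = `|ln q| + 1 by rewrite /T mulrC divfK // gt_eqF.
have T0 : 0 < T by rewrite /T divr_gt0 //; have := normr_ge0 (ln q); lra.
have ET : expR (- (beta * T)) < q.
  rewrite -[X in _ < X](@lnK R q) ?posrE // ltr_expR bT.
  have := lexx `|ln q|; rewrite ler_norml => /andP[H _]; lra.
set delta := expR (- (L * T)).
have dLT : delta * expR (L * T) = 1 by rewrite /delta -expRD addNr expR0.
have del1 : delta < 1 by rewrite /delta expR_lt1 oppr_lt0 mulr_gt0.
have del0 : 0 < delta by exact: expR_gt0.
exists delta => // k kc kd /andP[k0p k0d].
set F := fun t => ode_rhs C1 C2 alpha beta d t (k t).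
have kd' : forall t : R, 0 < t -> is_derive t 1 k (F t) by exact: kd.
have kr : k x @[x --> 0^'+] --> k 0 by have [] := (continuous_within_itvcyP 0 k).1 kc.
have barr_r : forall p c e a : R,
    (fun s => p + c * expR (e * s)) x @[x --> a^'+] --> (p + c * expR (e * a)).
  move=> p c e a; have H := der_cont _ _ _ (is_derive_bar p c e a).
  exact: (cvg_at_right_filter H).
have barr_d : forall p c e : R, forall t : R, 0 < t ->
    is_derive t 1 (fun s => p + c * expR (e * s)) (c * (e * expR (e * t))).
  by move=> p c e t _; exact: is_derive_bar.
set m := k 0 / 2.
have m0 : 0 < m by rewrite /m; lra.
have lowA : forall t, 0 <= t -> m < k t.
  move=> t t0.
  have := @barrier R (fun s => m + 0 * expR (0 * s)) k (fun s => 0 * (0 * expR (0 * s))) F 0 t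
    (lexx 0) (barr_r _ _ _ _) kr (barr_d _ _ _) kd'.
  move=> H; suff : m + 0 * expR (0 * t) < k t by rewrite mul0r addr0.
  apply: H; last by rewrite t0 lexx.
    by rewrite mul0r addr0 /m; lra.
  move=> s /andP[s0 st]; rewrite !mul0r addr0 => e; rewrite /F -e.
  apply: rhs_pos => //; [exact: ltW|].
  by rewrite m0 /m; lra.
have upB : forall t, 0 <= t <= T -> k t < 0 + (2 * delta) * expR (L * t).
  move=> t ht.
  apply: (@barrier R k (fun s => 0 + (2 * delta) * expR (L * s)) F
    (fun s => (2 * delta) * (L * expR (L * s))) 0 T (lexx 0) kr (barr_r _ _ _ _) kd' (barr_d _ _ _)) => //.
  - by rewrite mulr0 expR0; lra.
  - move=> s /andP[s0 sT] e.
    set x := 0 + 2 * delta * expR (L * s).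
    have x0 : 0 < x by rewrite /x add0r !mulr_gt0 ?expR_gt0 //.
    have x2 : x <= 2.
      rewrite /x add0r -mulrA; have : expR (L * s) <= expR (L * T).
        by rewrite ler_expR ler_pM2l.
      move=> H; have := ler_wpM2l (ltW del0) H; rewrite dLT; lra.
    rewrite /F e -/x.
    have H1 := @rhs_up1 R C1 C2 alpha beta d s x c1 (ltW c2) (ltW be) (ltW s0) (ltac:(by rewrite x0 x2)).
    apply: le_lt_trans H1 _.
    have H2 : (C1 + C2 * 2 ^+ d) * x < L * x by rewrite ltr_pM2r // /L; lra.
    have -> : 2 * delta * (L * expR (L * s)) = L * x by rewrite /x add0r; ring.
    exact: H2.
have kT : k T < 2.
  have := upB T (ltac:(by rewrite (ltW T0) lexx)); by rewrite add0r -mulrA dLT mulr1.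
have upC : forall t, T <= t -> k t < 2.
  move=> t ht.
  have := @barrier R k (fun s => 2 + 0 * expR (0 * s)) F (fun s => 0 * (0 * expR (0 * s))) T t
    (ltW T0) (cvg_at_right_filter (der_cont _ _ _ (kd' T T0))) (barr_r _ _ _ _) kd' (barr_d _ _ _).
  move=> H; suff : k t < 2 + 0 * expR (0 * t) by rewrite mul0r addr0.
  apply: H; last by rewrite ht lexx.
    by rewrite mul0r addr0.
  move=> s /andP[sT st]; rewrite !mul0r addr0 /F => ->.
  rewrite /ode_rhs -/P2 -/K.
  have Es : expR (- (beta * s)) < q.
    apply: le_lt_trans ET; rewrite ler_expR lerN2 ler_pM2l //; exact: ltW.
  have : K * expR (- (beta * s)) < K * q by rewrite ltr_pM2l.
  rewrite [K * q]mulrC qK; lra.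
have up2 : forall t, 0 <= t -> k t < 2.
  move=> t t0; case: (leP t T) => tT; last by apply: upC; exact: ltW.
  apply: (lt_le_trans (upB t _)); first by rewrite t0 tT.
  rewrite add0r -mulrA; have : expR (L * t) <= expR (L * T) by rewrite ler_expR ler_pM2l.
  move=> H; have := ler_wpM2l (ltW del0) H; rewrite dLT; lra.
set e1 := C1 * m * alpha / (2 * (1 + alpha)).
have e10 : 0 < e1 by rewrite /e1 !mulr_gt0 ?invr_gt0 //; lra.
have e1a : e1 * (1 + alpha) * 2 = C1 * m * alpha by rewrite /e1; field; lra.
set eps := Num.min beta (Num.min e1 (C1 * alpha / 8)).
have eps0 : 0 < eps by rewrite /eps !lt_min be e10 /= divr_gt0 // mulr_gt0.
have epsb : eps <= beta by rewrite /eps ge_min lexx.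
have epse1 : eps <= e1 by rewrite /eps !ge_min lexx orbT.
have epsa : eps <= C1 * alpha / 8 by rewrite /eps !ge_min lexx !orbT.
set B := 1 + 4 * K / (C1 * alpha).
have B1 : 1 <= B by rewrite /B lerDl divr_ge0 // ?mulr_ge0 // ltW // mulr_gt0.
have BK : C1 * alpha * B = C1 * alpha + 4 * K by rewrite /B; field; rewrite !gt_eqF.
exists B, eps; split => //; first lra.
move=> t t0.
have lowD : 1 + (-1) * expR ((- eps) * t) < k t.
  have := @barrier R (fun s => 1 + (-1) * expR ((- eps) * s)) k
    (fun s => (-1) * ((- eps) * expR ((- eps) * s))) F 0 t
    (lexx 0) (barr_r _ _ _ _) kr (barr_d _ _ _) kd'.
  apply => //; last by rewrite t0 lexx.
    by rewrite mulr0 expR0; lra.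
  move=> s /andP[s0 st] e.
  have E0 : 0 < expR (- eps * s) by exact: expR_gt0.
  set x := k s.
  have xm : m < x by apply: lowA; exact: ltW.
  have x1 : x < 1 by rewrite /x -e; lra.
  have H := @rhs_low R C1 C2 alpha beta d s m x c1 (ltW c2) al (ltac:(by rewrite m0 ltW)) x1.
  rewrite /F -/x.
  have ex : 1 - x = expR (- eps * s) by rewrite /x -e; lra.
  have : eps * (1 + alpha) * (1 - x) < C1 * m * alpha * (1 - x).
    rewrite ltr_pM2r ?subr_gt0 //.
    have : eps * (1 + alpha) <= e1 * (1 + alpha) by rewrite ler_pM2r //; lra.
    have : 0 < e1 * (1 + alpha) by rewrite mulr_gt0 //; lra.
    lra.
  move=> H2.
  have H3 : eps * (1 - x) * (1 + alpha) < ode_rhs C1 C2 alpha beta d s x * (1 + alpha).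
    rewrite [X in _ < X]mulrC; apply: lt_le_trans H; by rewrite mulrAC.
  rewrite ltr_pM2r in H3; last by lra.
  rewrite ex in H3; by rewrite mulN1r mulNr opprK.
have upD : k t < 1 + B * expR ((- eps) * t).
  have := @barrier R k (fun s => 1 + B * expR ((- eps) * s)) F
    (fun s => B * ((- eps) * expR ((- eps) * s))) 0 t
    (lexx 0) kr (barr_r _ _ _ _) kd' (barr_d _ _ _).
  apply => //; last by rewrite t0 lexx.
    by rewrite mulr0 expR0 mulr1; lra.
  move=> s /andP[s0 st] e.
  have E0 : 0 < expR (- eps * s) by exact: expR_gt0.
  set E := expR (- eps * s) in E0 e *.
  set x := k s.
  have x2 : x < 2 by apply: up2; exact: ltW.
  have x1 : 1 < x by rewrite /x e; have := mulr_gt0 (lt_le_trans ltr01 B1) E0; lra.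
  have H := @rhs_hi R C1 C2 alpha beta d s x c1 (ltW c2) al (ltac:(by rewrite x1 ltW)).
  have Eb : expR (- (beta * s)) <= E.
    by rewrite /E ler_expR mulNr lerN2 ler_pM2r.
  have ex : x - 1 = B * E by rewrite /x e; lra.
  rewrite /F -/x -/K in H *; rewrite ex in H.
  have h1 : K * expR (- (beta * s)) <= K * E by rewrite ler_pM2l.
  have h2 : 2 * (eps * B) <= C1 * alpha * B / 4.
    have : 0 < B by lra.
    move=> B0; have := ler_wpM2r (ltW B0) epsa; lra.
  have h3 : 0 < E * (C1 * alpha) by rewrite !mulr_gt0.
  have h4 : (2 * (eps * B)) * E <= (C1 * alpha * B / 4) * E by rewrite ler_pM2r.
  move: H h1 h2 h4; rewrite BK; nra.
move: lowD upD; rewrite mulN1r !mulNr => l u.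
have E0 : 0 <= expR (- (eps * t)) by exact: expR_ge0.
rewrite ler_norml; apply/andP; split.
  have := ler_wpM2r E0 B1; lra.
lra.
Qed.
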